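(* Let $r\ge2$, let $s_1,\dots,s_r,n$ be independent indeterminates over $\mathbb{Q}$, and let $R_1=n\,S_r(r\varphi(t)-t\varphi'(t))-S_r(\varphi(t))\,\mathrm{diag}(r-1,r-2,\ldots,1,0)$. Then \[ R_1^{-1}=\frac1n\,Q\left(\frac{r-1}{r},\frac{r-2}{r},\ldots,\frac1r,\frac0r\right)\mathrm{diag}(\zeta_1,\ldots,\zeta_r)\,P\left(-\frac{2r-1}{r},-\frac{2r-2}{r},\ldots,-\frac{r+1}{r},-\frac rr\right), \] where $\zeta_i=\frac{n}{rn-(r-i)}$ for $1\le i\le r$.
   Context: $\varphi(t)=1+s_1t+\cdots+s_rt^r$. For $\lambda\in\mathbb{C}$ and $\ell\in\mathbb{Z}$, $\beta_\ell(\lambda)$ is the coefficient of $t^\ell$ in $\varphi(t)^\lambda$ (so $\beta_0=1$, $\beta_\ell=0$ for $\ell<0$). For $\lambda_1,\dots,\lambda_m$, $P(\lambda_1,\ldots,\lambda_m)$ is the $m\times m$ matrix with $(i,j)$ entry $\beta_{i-j}(\lambda_i)$; $Q(\mu_1,\ldots,\mu_m)$ is the $m\times m$ matrix with $(i,j)$ entry $\beta_{i-j}(\mu_j)$. For a power series $\psi(t)=a_0+a_1t+\cdots$, $S_m(\psi(t))$ is the $m\times m$ matrix with $(i,j)$ entry $a_{i-j}$ ($a_i=0$ for $i<0$). *)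

(* Defs.v *)
From HB Require Import structures.
From mathcomp Require Import all_boot all_order all_algebra.
From mathcomp Require Import mpoly.
Set Implicit Arguments. Unset Strict Implicit. Unset Printing Implicit Defensive.
Import Order.TTheory GRing.Theory Num.Theory.
Local Open Scope ring_scope.

Section Defs.
Variable K : fieldType.

(* phi(t) = 1 + s_1 t + ... + s_r t^r, with s : 'I_r -> K (s (i) = s_{i+1}) *)
Definition phi (r : nat) (s : 'I_r -> K) : {poly K} :=
  1 + \sum_(i < r) s i *: 'X^(i.+1).

Definition gbinom (lam : K) (k : nat) : K :=
  (\prod_(i < k) (lam - i%:R)) / (k`!)%:R.

(* beta_l(lam) = coefficient of t^l in phi(t)^lam
   = coefficient of t^l in sum_k binom(lam,k) (phi(t)-1)^k  (binomial series);
   beta_l = 0 for l < 0. *)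
Definition beta (r : nat) (s : 'I_r -> K) (l : int) (lam : K) : K :=
  match l with
  | Posz m => \sum_(k < m.+1) gbinom lam k * ((phi s - 1) ^+ k)`_m
  | Negz _ => 0
  end.

Definition Pmx (r : nat) (s : 'I_r -> K) (m : nat) (lam : 'I_m -> K) : 'M[K]_m :=
  \matrix_(i < m, j < m) beta s (i%:Z - j%:Z) (lam i).

Definition Qmx (r : nat) (s : 'I_r -> K) (m : nat) (mu : 'I_m -> K) : 'M[K]_m :=
  \matrix_(i < m, j < m) beta s (i%:Z - j%:Z) (mu j).

Definition Smx (m : nat) (psi : {poly K}) : 'M[K]_m :=
  \matrix_(i < m, j < m) (if (j <= i)%N then psi`_(i - j) else 0).

End Defs.

(* The field Q(s_1,...,s_r,n): fractions of polynomials in r+1 indeterminates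
   over rat; variables 'X_0..'X_(r-1) are s_1..s_r, 'X_r is n. *)
Definition QSn (r : nat) := {fraction {mpoly rat[r.+1]}}.

Definition s_ind (r : nat) (i : 'I_r) : QSn r :=
  tofrac ('X_(widen_ord (leqnSn r) i) : {mpoly rat[r.+1]}).

Definition n_ind (r : nat) : QSn r :=
  tofrac ('X_(ord_max) : {mpoly rat[r.+1]}).

(* Main.v *)
Require Import Defs.
From HB Require Import structures.
From mathcomp Require Import all_boot all_order all_algebra.
From mathcomp Require Import mpoly.
From mathcomp Require Import ring zify.
Import GRing.Theory.
Local Open Scope ring_scope.

Section Core.
Variable K : fieldType.
Hypothesis Kchar : forall k : nat, (k.+1)%:R != 0 :> K.
Variable r : nat.
Hypothesis hr : (0 < r)%N.
Variable s : 'I_r -> K.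

Local Notation ph := (phi s).
Definition vv := \sum_(i < r) s i *: 'X^i.

Lemma u_def : phi s - 1 = 'X * vv.
Proof.
rewrite /phi [1 + _]addrC addrK /vv mulr_sumr; apply: eq_bigr => i _.
by rewrite exprS scalerAr.
Qed.

Lemma coef_u_exp k m : (m < k)%N -> ((phi s - 1)^+k)`_m = 0.
Proof. by move=> h; rewrite u_def exprMn coefXnM h. Qed.

Lemma ph0 : ph`_0 = 1.
Proof.
have := @coef_u_exp 1 0 (ltn0Sn 0); rewrite expr1 coefB coef1 /=.
by move/eqP; rewrite subr_eq0 => /eqP.
Qed.

Definition E (lam : K) := \sum_(k < r) gbinom lam k *: (phi s - 1)^+k.

Lemma gbinom0 (lam : K) : gbinom lam 0 = 1.
Proof. by rewrite /gbinom big_ord0 fact0 divr1. Qed.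

Lemma gbinomS (lam : K) k : (k.+1)%:R * gbinom lam k.+1 = (lam - k%:R) * gbinom lam k.
Proof.
rewrite /gbinom big_ord_recr /= factS natrM.
have h1 := Kchar k. have h2 : (k`!)%:R != 0 :> K.
  by rewrite -(prednK (fact_gt0 k)) Kchar.
field; by rewrite h2 addrC natr1 h1.
Qed.

Lemma E0 (lam : K) : (E lam)`_0 = 1.
Proof.
rewrite /E coef_sum (bigD1 (Ordinal hr)) //= big1 => [|k /eqP nk].
  by rewrite coefZ expr0 coef1 gbinom0 mulr1 addr0.
rewrite coefZ coef_u_exp ?mulr0 //; rewrite lt0n; apply/eqP => k0; apply: nk.
by apply/val_inj.
Qed.

Lemma beta_E (lam : K) (i j : 'I_r) :
  beta s (i%:Z - j%:Z) lam = if (j <= i)%N then (E lam)`_(i - j) else 0.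
Proof.
case: leqP => hji.
  rewrite subzn //= /E coef_sum.
  have hw : (i - j < r)%N by rewrite (leq_ltn_trans (leq_subr _ _)).
  rewrite (big_ord_widen r (fun k => gbinom lam k * ((phi s - 1)^+k)`_(i - j)) hw).
  rewrite big_mkcond /=; apply: eq_bigr => k _; rewrite coefZ.
  by case: ifP => // /negbT; rewrite -leqNgt => h; rewrite coef_u_exp ?mulr0.
have -> : i%:Z - j%:Z = Negz (j - i).-1.
  by rewrite NegzE prednK ?subn_gt0 // -opprB subzn // ltnW.
by [].
Qed.

Definition EK (u : {poly K}) (lam : K) (N : nat) := \sum_(k < N) gbinom lam k *: u^+k.

Lemma EK_ode (u : {poly K}) (lam : K) N :
  (1 + u) * (EK u lam N.+1)^`() - lam *: (u^`() * EK u lam N.+1)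
  = ((N%:R - lam) * gbinom lam N) *: (u^`() * u^+N).
Proof.
elim: N => [|N IH].
  rewrite /EK big_ord1 gbinom0 scale1r !expr0 -(polyC1) derivC.
  by rewrite mulr0 !sub0r !mulr1 scaleNr.
rewrite /EK big_ord_recr /= -/(EK u lam N.+1) derivD derivZ deriv_exp /=.
set a := gbinom lam N. set b := gbinom lam N.+1.
have hb : (N.+1)%:R * b = (lam - N%:R) * a by apply: gbinomS.
move: IH; rewrite -/a => IH.
have -> : (1 + u) * ((EK u lam N.+1)^`() + b *: (u^`() * u ^+ N *+ N.+1)) -
  lam *: (u^`() * (EK u lam N.+1 + b *: u ^+ N.+1))
  = ((1 + u) * (EK u lam N.+1)^`() - lam *: (u^`() * EK u lam N.+1))
    + ((N.+1)%:R * b)%:P * (u^`() * u^+N) + (b * ((N.+1)%:R - lam))%:P * (u^`() * u^+N.+1).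
  rewrite -!mul_polyC !exprS. ring.
rewrite IH hb -!mul_polyC exprS. ring.
Qed.

Definition eqm N (p q : {poly K}) := forall i, (i < N)%N -> p`_i = q`_i.

Lemma eqmM {N} c {p q} : eqm N p q -> eqm N (c * p) (c * q).
Proof.
move=> h i hi; rewrite !coefM; apply: eq_bigr => k _; rewrite h //.
exact: leq_ltn_trans (leq_subr _ _) hi.
Qed.

Lemma eqmMr {N} c {p q} : eqm N p q -> eqm N (p * c) (q * c).
Proof. by move=> h; rewrite ![_ * c]mulrC; apply: eqmM. Qed.

Lemma eqmD {N p q p' q'} : eqm N p q -> eqm N p' q' -> eqm N (p + p') (q + q').
Proof. by move=> h h' i hi; rewrite !coefD h ?h'. Qed.

Lemma eqmB {N p q p' q'} : eqm N p q -> eqm N p' q' -> eqm N (p - p') (q - q').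
Proof. by move=> h h' i hi; rewrite !coefB h ?h'. Qed.

Lemma eqmZ {N} c {p q} : eqm N p q -> eqm N (c *: p) (c *: q).
Proof. by move=> h i hi; rewrite !coefZ h. Qed.

Lemma eqm_refl N p : eqm N p p. Proof. by []. Qed.
Lemma eqm_trans {N p q w} : eqm N p q -> eqm N q w -> eqm N p w.
Proof. by move=> h h' i hi; rewrite h ?h'. Qed.
Lemma eqm_eq N p q : p = q -> eqm N p q. Proof. by move->. Qed.
Lemma eqm_le {N M p q} : (N <= M)%N -> eqm M p q -> eqm N p q.
Proof. by move=> hNM h i hi; rewrite h // (leq_trans hi). Qed.
Lemma eqm_Xn {N} k {p q} : eqm N p q -> eqm (N + k) ('X^k * p) ('X^k * q).
Proof.
move=> h i hi; rewrite !coefXnM; case: ifP => // /negbT; rewrite -leqNgt => hk.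
by rewrite h // ltn_subLR // addnC.
Qed.

Lemma E_ode lam : eqm r.-1 (ph * (E lam)^`()) (lam *: (ph^`() * E lam)).
Proof.
have hph : ph = 1 + (ph - 1) by rewrite addrC subrK.
have hd : ph^`() = (ph - 1)^`() by rewrite derivB -polyC1 derivC subr0.
have hE : E lam = EK (ph - 1) lam (r.-1).+1 by rewrite prednK.
move=> i hi; apply/eqP; rewrite -subr_eq0 -coefB; apply/eqP.
rewrite {1}hph hd hE EK_ode coefZ u_def exprMn [_^`() * _]mulrCA coefXnM hi.
by rewrite mulr0.
Qed.

Lemma ode_mul N a b F G :
  eqm N (ph * F^`()) (a *: (ph^`() * F)) -> eqm N (ph * G^`()) (b *: (ph^`() * G)) ->
  eqm N (ph * (F * G)^`()) ((a + b) *: (ph^`() * (F * G))).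
Proof.
move=> hF hG.
have -> : ph * (F * G)^`() = (ph * F^`()) * G + F * (ph * G^`()).
  by rewrite derivM; ring.
apply: (eqm_trans (eqmD (eqmMr G hF) (eqmM F hG))).
apply: eqm_eq; rewrite -!mul_polyC; ring.
Qed.

Definition Cmx (g : 'I_r -> {poly K}) : 'M[K]_r := \matrix_(i < r, j < r) (g j)`_i.

Lemma Smx_Cmx p g : Smx r p *m Cmx g = Cmx (fun j => p * g j).
Proof.
apply/matrixP => i j; rewrite !mxE coefM.
rewrite [RHS](reindex_inj rev_ord_inj) /=.
have -> : \sum_(k < i.+1) p`_(i.+1 - k.+1) * (g j)`_(i - (i.+1 - k.+1))
   = \sum_(k < i.+1) p`_(i - k) * (g j)`_k.
  apply: eq_bigr => k _; rewrite subSS subKn //; exact: ltn_ord k.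
rewrite (big_ord_widen r (fun k => p`_(i - k) * (g j)`_k) (ltn_ord i)).
rewrite [RHS]big_mkcond /=; apply: eq_bigr => k _; rewrite !mxE ltnS.
by case: ifP => //; rewrite mul0r.
Qed.

Lemma Pmx_Cmx lam g :
  Pmx s lam *m Cmx g = \matrix_(i < r, j < r) (E (lam i) * g j)`_i.
Proof.
apply/matrixP => i j; rewrite [RHS]mxE.
transitivity ((Smx r (E (lam i)) *m Cmx g) i j); last by rewrite Smx_Cmx mxE.
rewrite !mxE; apply: eq_bigr => k _; by rewrite !mxE beta_E.
Qed.

Lemma Qmx_Cmx mu : Qmx s mu = Cmx (fun j => 'X^j * E (mu j)).
Proof.
apply/matrixP => i j; rewrite !mxE beta_E coefXnM ltnNge.
by case: (j <= i)%N.
Qed.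

Lemma Cmx_diag g c : Cmx g *m diag_mx (\row_i c i) = Cmx (fun j => c j *: g j).
Proof. by apply/matrixP => i j; rewrite mul_mx_diag !mxE coefZ mulrC. Qed.

Lemma diag_Cmx g :
  diag_mx (\row_(i < r) ((r - 1 - i)%N)%:R) *m Cmx g
  = Cmx (fun j => (r - 1)%:R *: g j - 'X * (g j)^`()).
Proof.
apply/matrixP => i j; rewrite mul_diag_mx !mxE coefB coefZ coefXM.
have hi : (i <= r - 1)%N by rewrite -ltnS subn1 prednK.
rewrite natrB //.
rewrite mulrBl; move: hi; case: i => [[|k] hk] /= _; first by rewrite mul0r subr0.
by rewrite coef_deriv mulr_natl.
Qed.

Lemma Cmx_ext g h : (forall j, eqm r (g j) (h j)) -> Cmx g = Cmx h.
Proof. by move=> H; apply/matrixP => i j; rewrite !mxE H. Qed.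

Lemma Cmx_lin (n : K) g1 g2 : n *: Cmx g1 - Cmx g2 = Cmx (fun j => n *: g1 j - g2 j).
Proof. by apply/matrixP => i j; rewrite !mxE coefB coefZ. Qed.

Lemma CmxZ (n : K) g : n *: Cmx g = Cmx (fun j => n *: g j).
Proof. by apply/matrixP => i j; rewrite !mxE coefZ. Qed.

Definition aa := r%:R *: ph - 'X * ph^`().
Definition Dp := ph - (r%:R)^-1 *: ('X * ph^`()).

Lemma hXd j : 'X * ('X^j)^`() = j%:R *: ('X^j : {poly K}).
Proof.
rewrite derivXn; case: j => [|k] /=; first by rewrite mulr0n mulr0 scale0r.
by rewrite mulrnAr -exprS scaler_nat.
Qed.

Lemma rne0 : r%:R != 0 :> K.
Proof. by rewrite -(prednK hr) Kchar. Qed.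

Lemma natm (j : 'I_r) : ((r - 1 - j)%N)%:R = r%:R - 1 - j%:R :> K.
Proof.
have hj : (j <= r - 1)%N by rewrite -ltnS subn1 prednK.
by rewrite natrB // natrB.
Qed.

Lemma natr1' : ((r - 1)%N)%:R = r%:R - 1 :> K.
Proof. by rewrite natrB. Qed.

Lemma col_R1 (n : K) (j : 'I_r) :
  let mu := ((r - 1 - j)%N)%:R / r%:R in
  let f := 'X^j * E mu in
  eqm r (n *: (aa * f) - ph * ((r - 1)%:R *: f - 'X * f^`()))
        ((r%:R * n - ((r - 1 - j)%N)%:R) *: (Dp * f)).
Proof.
move=> mu f.
have h1 : ph * ('X * f^`()) = ph * ('X * ('X^j)^`()) * E mu + 'X^(j.+1) * (ph * (E mu)^`()).
  by rewrite /f derivM exprS; ring.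
rewrite hXd in h1.
have h2 : eqm r (ph * ('X * f^`()))
   ((j%:R *: ph * f) + 'X^(j.+1) * (mu *: (ph^`() * E mu))).
  rewrite h1 /f -mulrA -scalerAl; apply: eqmD.
    by apply: eqm_eq; rewrite -!mul_polyC; ring.
  apply: (eqm_le _ (eqm_Xn j.+1 (E_ode mu))).

  by move: hr; clear; lia.
have h3 : n *: (aa * f) - ph * ((r - 1)%:R *: f - 'X * f^`())
   = n *: (aa * f) - (r - 1)%:R *: (ph * f) + ph * ('X * f^`()).
  rewrite -!mul_polyC; ring.
rewrite h3; apply: eqm_trans (eqmD (eqm_refl _ _) h2) _.
apply: eqm_eq.
set A := (n * r%:R - (r - 1)%:R + j%:R).
set B := (mu - n).
have -> : n *: (aa * f) - (r - 1)%:R *: (ph * f) +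
   (j%:R *: ph * f + 'X^(j.+1) * (mu *: (ph^`() * E mu)))
   = A *: (ph * f) + B *: ('X * ph^`() * f).
  rewrite /A /B /aa /f -!mul_polyC exprS. ring.
have -> : (r%:R * n - ((r - 1 - j)%N)%:R) *: (Dp * f)
   = (r%:R * n - ((r - 1 - j)%N)%:R) *: (ph * f)
     + (- ((r%:R * n - ((r - 1 - j)%N)%:R) / r%:R)) *: ('X * ph^`() * f).
  rewrite /Dp -!mul_polyC. ring.
congr (_ *: _ + _ *: _).
  by rewrite /A natm natr1'; ring.
rewrite /B /mu natm; field; exact: rne0.
Qed.

Lemma GD (G : {poly K}) (c : K) d : G`_0 = 1 ->
  eqm r.-1 (ph * G^`()) (c *: (ph^`() * G)) ->
  (c + 1) * r%:R = d%:R -> (d < r)%N -> (G * Dp)`_d = (d == 0%N)%:R.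
Proof.
move=> G0 hode hc hd.
case: d hc hd => [|d] hc hd.
  by rewrite coef0M G0 /Dp coefB coefZ coefXM /= ph0 mulr0 subr0 mul1r.
have -> : G * Dp = ph * G - (r%:R)^-1 *: ('X * (ph^`() * G)).
  by rewrite /Dp -!mul_polyC; ring.
rewrite coefB coefZ coefXM /=.
set x := (ph * G)`_d.+1. set y := (ph^`() * G)`_d.
have h1 : x *+ d.+1 = (c + 1) * y.
  rewrite /x -coef_deriv derivM coefD hode; last by move: hd; clear; lia.
  by rewrite coefZ /y mulrDl mul1r addrC.
have hr0 := rne0.
have hc' : c + 1 = d.+1%:R / r%:R by rewrite -hc mulfK.
rewrite hc' -(mulr_natr x) in h1.
have hx : x = y / r%:R.
  apply: (mulIf (Kchar d)); rewrite h1; field; done.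
by rewrite hx mulrC subrr.
Qed.

Lemma PDQ (lam mu : 'I_r -> K)
  (hlm : forall i j : 'I_r, (j <= i)%N -> (lam i + mu j + 1) * r%:R = (i - j)%N%:R) :
  Pmx s lam *m Cmx (fun j => Dp * ('X^j * E (mu j))) = 1%:M.
Proof.
rewrite Pmx_Cmx; apply/matrixP => i j; rewrite !mxE.
have -> : E (lam i) * (Dp * ('X^j * E (mu j))) = 'X^j * ((E (lam i) * E (mu j)) * Dp).
  by ring.
rewrite coefXnM; case: ltnP => hij.
  by case: eqP => [e|//]; rewrite e ltnn in hij.
rewrite (@GD _ (lam i + mu j)) ?hlm //.
- have -> : (i - j == 0)%N = (i == j :> nat) by rewrite subn_eq0 eqn_leq hij andbT.
  by [].
- by rewrite coef0M !E0 mulr1.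
- exact: ode_mul (E_ode _) (E_ode _).
- exact: leq_ltn_trans (leq_subr _ _) (ltn_ord i).
Qed.

Theorem core (n : K) (hn : n != 0)
  (hz : forall j : 'I_r, r%:R * n - ((r - 1 - j)%N)%:R != 0) :
  let R1 : 'M[K]_r :=
    n *: Smx r (r%:R *: phi s - 'X * (phi s)^`())
    - Smx r (phi s) *m diag_mx (\row_(i < r) ((r - 1 - i)%N)%:R) in
  invmx R1 =
    n^-1 *: (Qmx s (fun j : 'I_r => ((r - 1 - j)%N)%:R / r%:R)
             *m diag_mx (\row_(i < r) (n / (r%:R * n - ((r - 1 - i)%N)%:R)))
             *m Pmx s (fun i : 'I_r => - (((2 * r - 1 - i)%N)%:R / r%:R))).
Proof.
move=> R1.
set mu := (fun j : 'I_r => ((r - 1 - j)%N)%:R / r%:R).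
set lam := (fun i : 'I_r => - (((2 * r - 1 - i)%N)%:R / r%:R)).
set M := n^-1 *: _.
have hQ : R1 *m Qmx s mu
   = Cmx (fun j => (r%:R * n - ((r - 1 - j)%N)%:R) *: (Dp * ('X^j * E (mu j)))).
  rewrite /R1 Qmx_Cmx mulmxBl -scalemxAl Smx_Cmx -mulmxA diag_Cmx Smx_Cmx Cmx_lin.
  apply: Cmx_ext => j; exact: col_R1.
have hlm : forall i j : 'I_r, (j <= i)%N -> (lam i + mu j + 1) * r%:R = (i - j)%N%:R.
  move=> i j hij.
  have e : ((2 * r - 1 - i)%N)%:R = r%:R + ((r - 1 - j)%N)%:R - ((i - j)%N)%:R :> K.
    apply/eqP; rewrite eq_sym subr_eq -!natrD; apply/eqP; congr (_%:R).
    have := ltn_ord i; have := ltn_ord j; move: hij; clear; lia.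
  rewrite /lam /mu e; field; exact: rne0.
have hR : R1 *m M = 1%:M.
  rewrite /M -scalemxAr !mulmxA hQ Cmx_diag.
  have -> : Cmx (fun j => n / (r%:R * n - ((r - 1 - j)%N)%:R) *:
        ((r%:R * n - ((r - 1 - j)%N)%:R) *: (Dp * ('X^j * E (mu j)))))
      = n *: Cmx (fun j => Dp * ('X^j * E (mu j))).
    rewrite CmxZ; apply: Cmx_ext => j; apply: eqm_eq.
    by rewrite scalerA mulfVK // hz.
  rewrite -scalemxAl scalerA mulVf // scale1r.
  apply: mulmx1C; exact: (PDQ _ _ hlm).
have [uR _] := mulmx1_unit hR.
by rewrite -[RHS]mul1mx -(mulVmx uR) -mulmxA hR mulmx1.
Qed.

End Core.

Import Num.Theory.

Lemma QSn_ne0 r (p : {mpoly rat[r.+1]}) :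
  meval (fun _ => 1) p != 0 -> (tofrac p : QSn r) != 0.
Proof. by move=> h; rewrite tofrac_eq0; apply: contra h => /eqP ->; rewrite meval0. Qed.

Lemma QSn_char r k : (k.+1)%:R != 0 :> QSn r.
Proof.
have -> : (k.+1)%:R = tofrac ((k.+1)%:R : {mpoly rat[r.+1]}) by rewrite rmorph_nat.
by apply: QSn_ne0; rewrite rmorph_nat pnatr_eq0.
Qed.

Lemma aux r (m : nat) : (m < r)%N ->
  meval (fun _ => 1) (r%:R * 'X_(ord_max) - m%:R : {mpoly rat[r.+1]}) != 0.
Proof.
move=> hm; rewrite mevalB mevalM mevalXU !mevalMn !meval1 mulr1 -natrB ?pnatr_eq0 ?subn_eq0 -?ltnNge //.
exact: ltnW.
Qed.

Theorem lemma13 (r : nat) (hr : (2 <= r)%N) :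
  let K := QSn r in
  let s := @s_ind r in
  let n := n_ind r in
  let R1 : 'M[K]_r :=
    n *: Smx r (r%:R *: phi s - 'X * (phi s)^`())
    - Smx r (phi s) *m diag_mx (\row_(i < r) ((r - 1 - i)%N)%:R) in
  invmx R1 =
    n^-1 *: (Qmx s (fun j : 'I_r => ((r - 1 - j)%N)%:R / r%:R)
             *m diag_mx (\row_(i < r) (n / (r%:R * n - ((r - 1 - i)%N)%:R)))
             *m Pmx s (fun i : 'I_r => - (((2 * r - 1 - i)%N)%:R / r%:R))).
Proof.
have hr0 : (0 < r)%N by apply: leq_trans hr.
apply: (@core (QSn r) (@QSn_char r) r hr0 (@s_ind r) (n_ind r)).
  rewrite /n_ind; apply: QSn_ne0. have := mevalXU (fun _ => 1 : rat) (ord_max : 'I_r.+1).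
  by move=> e; exact: (eq_ind_r (fun x => x != 0) (oner_neq0 _) e).
move=> j.
have -> : r%:R * n_ind r - ((r - 1 - j)%N)%:R
   = tofrac (r%:R * 'X_(ord_max) - ((r - 1 - j)%N)%:R : {mpoly rat[r.+1]}).
  by rewrite rmorphB rmorphM !rmorph_nat.
apply: QSn_ne0; apply: aux; lia.
Qed.
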